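(* For an integer $k \geq 1$ let $X^{(k)}, X^{(k)}_1, X^{(k)}_2, \ldots$ be i.i.d.\ random variables with $\mathbb{P}\{X^{(k)} = 2^i\} = \frac{2^{-i}}{1-2^{-k}}$ for $i = 1, \ldots, k$, and let $S^{(k)}_n = X^{(k)}_1 + \cdots + X^{(k)}_n$. For $n \geq 1$ let $\gamma_n = n / 2^{\lceil \log_2 n\rceil} \in (1/2,1]$. For $x \geq 0$ put \[ h(x) = (2+x)\ln\left(1 + \frac{x}{2}\right) - x. \] Then for any $n \geq 1$, any integer $j \geq 1 - \lceil \log_2 n \rceil$ and any $x \geq 0$, \[ \mathbb{P}\left\{ S_n^{(\lceil \log_2 n\rceil + j)} - \mathbb{E} S_n^{(\lceil \log_2 n\rceil + j)} > n x \right\} \leq e^{-h(x)/\eta_{j,\gamma_n}}, \] where $\eta_{j,\gamma} = 2^j \gamma^{-1}$.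
   Context: $X^{(k)}$ has the conditional law of a St.~Petersburg variable $X$ (with $\mathbb{P}\{X=2^i\}=2^{-i}$, $i \in \mathbb{N}$) given $X \leq 2^k$. $\lceil \cdot \rceil$ denotes the upper integer part. *)

(* Defs.v *)
From mathcomp Require Import all_boot all_order all_algebra.
From mathcomp Require Import all_classical all_reals all_analysis.
Set Implicit Arguments. Unset Strict Implicit. Unset Printing Implicit Defensive.
Import Order.TTheory GRing.Theory Num.Theory.
Local Open Scope ring_scope.

(* ceil(log_2 n) for n >= 1: smallest e with n <= 2^e. *)
Definition clog2 (n : nat) : nat := up_log 2 n.

(* Truncated St. Petersburg law: P{X^(k) = 2^(i+1)} = 2^-(i+1)/(1-2^-k), i : 'I_k. *)
Definition pk (R : realType) (k : nat) (i : 'I_k) : R :=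
  (2%:R ^- i.+1) / (1 - 2%:R ^- k).

Definition valk (R : realType) (k : nat) (i : 'I_k) : R := (2 ^ i.+1)%:R.

Definition EXk (R : realType) (k : nat) : R := \sum_(i < k) pk R i * valk R i.

(* S_n^(k) on the product space 'I_k^n of n i.i.d. copies *)
Definition Snk (R : realType) (n k : nat) (t : {ffun 'I_n -> 'I_k}) : R :=
  \sum_(m < n) valk R (t m).

Definition tail_prob (R : realType) (n k : nat) (x : R) : R :=
  \sum_(t : {ffun 'I_n -> 'I_k})
     (\prod_(m < n) pk R (t m)) *
     (if Snk R t - n%:R * EXk R k > n%:R * x then 1 else 0).

Definition gamma_n (R : realType) (n : nat) : R := n%:R / (2 ^ clog2 n)%:R.

Definition h (R : realType) (x : R) : R := (2 + x) * ln (1 + x / 2) - x.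

Definition eta (R : realType) (j : int) (g : R) : R := (2%:R : R) ^ j / g.

(* Main.v *)
Require Import Defs.
From mathcomp Require Import all_boot all_order all_algebra.
From mathcomp Require Import ring lra zify.
From mathcomp Require Import all_classical all_reals all_analysis.
Import Order.TTheory GRing.Theory Num.Theory numFieldNormedType.Exports.
Local Open Scope ring_scope.

Section S.
Variable R : realType.
Definition sp_psi (u : R) : R := expR u + 3 + u - 4 * expR (u / 2).
Lemma dpsi (x : R) : is_derive x (1:R) sp_psi (expR x + 1 - 2 * expR (x / 2)).
Proof.
rewrite /sp_psi; apply: trigger_derive.
by rewrite !scaler0 addr0 add0r /GRing.scale /=; field.
Qed.
Lemma cpsi : continuous (sp_psi : R -> R).
Proof.
move=> y; have [d _] := dpsi y.
apply: differentiable_continuous; exact/derivable1_diffP.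
Qed.
Lemma psi_ge0 (u : R) : 0 <= u -> 4 * expR (u / 2) <= expR u + 3 + u.
Proof.
move=> u0.
have H0 : sp_psi 0 = 0 by rewrite /sp_psi mul0r !expR0 addr0; lra.
have : sp_psi 0 <= sp_psi u.
  apply: (@ger0_derive1_ndecry _ sp_psi 0) => //.
  - move=> y _; rewrite derive1E derive_val.
    rewrite !scaler0 addr0 add0r /GRing.scale /=; set e := expR (y/2).
    have -> : expR y = e ^+ 2 by rewrite expr2 -expRD; congr expR; field.
    rewrite (_ : _ + 1 - _ = (e - 1) ^+ 2); last by field.
    exact: sqr_ge0.
  - exact: continuous_subspaceT cpsi.
by rewrite H0 /sp_psi subr_ge0.
Qed.
Definition sp_phi (u : R) : R := expR u - 1 - u.
Lemma phi_half (u : R) : 0 <= u -> 4 * sp_phi (u / 2) <= sp_phi u.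
Proof. move=> u0; have := @psi_ge0 u u0; rewrite /sp_phi; lra. Qed.
Lemma phi_pow (m : nat) (u : R) : 0 <= u -> 4 ^+ m * sp_phi (u / 2 ^+ m) <= sp_phi u.
Proof.
move=> u0; elim: m => [|m IH]; first by rewrite !expr0 mul1r divr1.
have h0 : 0 <= u / 2 ^+ m by apply: divr_ge0 => //; apply: exprn_ge0.
have := @phi_half _ h0 => H.
have -> : u / 2 ^+ m.+1 = u / 2 ^+ m / 2 by rewrite exprSr invfM mulrA.
rewrite exprSr -mulrA.
apply: (le_trans _ IH); apply: ler_wpM2l; [by rewrite exprn_ge0 | exact: H].
Qed.
Lemma pointwise (lam : R) (i k : nat) : 0 <= lam -> (i < k)%N ->
  expR (lam * 2 ^+ i.+1) <= 1 + lam * 2 ^+ i.+1 + (2 ^+ i.+1 / 2 ^+ k) ^+ 2 * sp_phi (lam * 2 ^+ k).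
Proof.
move=> l0 ik; rewrite -(subnK ik); set m := (k - i.+1)%N.
set u := lam * 2 ^+ (m + i.+1).
have u0 : 0 <= u by rewrite /u mulr_ge0 // exprn_ge0.
have e1 : lam * 2 ^+ i.+1 = u / 2 ^+ m.
  by rewrite /u exprD; field; rewrite expf_neq0.
have e2 : (2 ^+ i.+1 / 2 ^+ (m + i.+1)) ^+ 2 = (4 ^+ m)^-1 :> R.
  have -> : (4:R) ^+ m = (2 ^+ m) ^+ 2.
    by rewrite -exprM mulnC exprM (_ : (2:R) ^+ 2 = 4) // expr2; lra.
  rewrite exprD; field; by rewrite !expf_neq0.
rewrite e1 e2.
have := @phi_pow m u u0; have h4 : 0 < 4 ^+ m :> R by rewrite exprn_gt0.
rewrite -ler_pdivlMl // mulrC => H.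
have : expR (u / 2 ^+ m) = 1 + u / 2 ^+ m + sp_phi (u / 2 ^+ m) by rewrite /sp_phi; ring.
move=> E; rewrite [u / _]mulrC in E; rewrite E lerD2l; exact: H.
Qed.
End S.

Section T.
Variable R : realType.
Lemma geo1 (k : nat) : \sum_(i < k) (2:R) ^- i.+1 = 1 - 2 ^- k.
Proof.
elim: k => [|k IH]; first by rewrite big_ord0 expr0 invr1 subrr.
rewrite big_ord_recr /= IH exprSr invfM; field; rewrite expf_neq0 // pnatr_eq0.
Qed.
Lemma geo2 (k : nat) : \sum_(i < k) (2:R) ^+ i.+1 = 2 ^+ k.+1 - 2.
Proof.
elim: k => [|k IH]; first by rewrite big_ord0 expr1 subrr.
rewrite big_ord_recr /= IH [in RHS]exprS; ring.
Qed.
Lemma den_pos (k : nat) : (0 < k)%N -> 0 < 1 - (2:R) ^- k.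
Proof.
move=> k0; rewrite subr_gt0 invf_lt1 ?exprn_gt0 //.
have k1 : k != 0%N by case: (k) k0.
by rewrite exprn_egt1 // ltr1n.
Qed.
Lemma pk_ge0 (k : nat) (i : 'I_k) : 0 <= pk R i.
Proof.
rewrite /pk; have [k0|] := posnP k; first by case: i => i; rewrite k0.
move=> k0; apply: divr_ge0; first by rewrite invr_ge0 exprn_ge0.
exact: ltW (den_pos _ k0).
Qed.
Lemma S1 (k : nat) : (0 < k)%N -> \sum_(i < k) pk R i = 1.
Proof.
move=> k0; rewrite /pk -mulr_suml geo1 divff //; exact: lt0r_neq0 (den_pos _ k0).
Qed.
Lemma S2 (k : nat) : (0 < k)%N -> \sum_(i < k) pk R i * valk R i ^+ 2 = 2 * 2 ^+ k.
Proof.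
move=> k0; have d0 := lt0r_neq0 (den_pos _ k0).
have e : (2:R) ^+ k != 0 by rewrite expf_neq0.
have k1 : k != 0%N by case: (k) k0.
have e1 : (2:R) ^+ k - 1 != 0.
  by rewrite subr_eq0 gt_eqF // exprn_egt1 // ltr1n.
rewrite (eq_bigr (fun i : 'I_k => (2:R) ^+ i.+1 / (1 - 2 ^- k))); last first.
  move=> i _; rewrite /pk /valk natrX; field; rewrite e e1 expf_neq0 //.
rewrite -mulr_suml geo2.
rewrite exprSr; field; rewrite e e1 //.
Qed.
End T.

Section T.
Variable R : realType.
Lemma sp_mgf (k : nat) (lam : R) : (0 < k)%N -> 0 <= lam ->
  \sum_(i < k) pk R i * expR (lam * valk R i)
    <= expR (lam * EXk R k + 2 / 2 ^+ k * sp_phi R (lam * 2 ^+ k)).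
Proof.
move=> k0 l0.
set b := (2:R) ^+ k; set P := sp_phi R (lam * b).
have b0 : b != 0 by rewrite expf_neq0.
apply: le_trans (expR_ge1Dx _).
apply: (@le_trans _ _ (\sum_(i < k) pk R i * (1 + lam * valk R i + (valk R i / b) ^+ 2 * P))).
  apply: ler_sum => i _; apply: ler_wpM2l; first exact: pk_ge0.
  rewrite /valk natrX; exact: pointwise R lam i k l0 (ltn_ord i).
have E : \sum_(i < k) pk R i * (1 + lam * valk R i + (valk R i / b) ^+ 2 * P) =
   \sum_(i < k) pk R i + lam * \sum_(i < k) (pk R i * valk R i)
     + (\sum_(i < k) pk R i * valk R i ^+ 2) * (P / b ^+ 2).
  rewrite mulr_sumr mulr_suml -!big_split /=; apply: eq_bigr => i _; field; exact: b0.
rewrite E S1 // S2 // /EXk.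
rewrite (_ : 2 * b * (P / b ^+ 2) = 2 / b * P); [lra | field; exact: b0].
Qed.
Lemma sp_chernoff (n k : nat) (x lam : R) : 0 <= lam ->
  @tail_prob R n k x <= expR (- (lam * (n%:R * EXk R k + n%:R * x))) *
     (\sum_(i < k) pk R i * expR (lam * valk R i)) ^+ n.
Proof.
move=> l0; rewrite /tail_prob.
set c := n%:R * EXk R k + n%:R * x.
apply: (@le_trans _ _ (\sum_(t : {ffun 'I_n -> 'I_k})
   (\prod_(m < n) pk R (t m)) * expR (lam * (Snk R t - c)))).
  apply: ler_sum => t _; apply: ler_wpM2l; first by apply: prodr_ge0 => m _; exact: pk_ge0.
  case: ifPn => H; last exact: expR_ge0.
  have h0 : 0 <= lam * (Snk R t - c) by apply: mulr_ge0 => //; rewrite /c; lra.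
  apply: le_trans (expR_ge1Dx _); lra.
rewrite (eq_bigr (fun t : {ffun 'I_n -> 'I_k} => expR (- (lam * c)) *
   \prod_(m < n) (pk R (t m) * expR (lam * valk R (t m))))); last first.
  move=> t _; rewrite [in RHS]big_split /= /Snk mulrBr expRD mulr_sumr expR_sum.
  by rewrite [RHS]mulrC -mulrA.
rewrite -mulr_sumr.
rewrite -(bigA_distr_bigA (fun (m : 'I_n) (i : 'I_k) => pk R i * expR (lam * valk R i))) /=.
by rewrite prodr_const card_ord.
Qed.
End T.

Section T.
Variable R : realType.
Lemma sp_bound (n k : nat) (x : R) : (0 < k)%N -> 0 <= x ->
  @tail_prob R n k x <= expR (- (n%:R / 2 ^+ k * h x)).
Proof.
move=> k0 x0.
set b := (2:R) ^+ k; set L := ln (1 + x / 2); set lam := L / b.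
have b0 : 0 < b by rewrite exprn_gt0.
have L0 : 0 <= L by apply: ln_ge0; lra.
have l0 : 0 <= lam by apply: divr_ge0 => //; exact: ltW.
have eL : expR L = 1 + x / 2 by rewrite /L lnK // posrE; lra.
apply: le_trans (sp_chernoff R n k x lam l0) _.
have M0 : 0 <= \sum_(i < k) pk R i * expR (lam * valk R i).
  by apply: sumr_ge0 => i _; apply: mulr_ge0; [exact: pk_ge0 | exact: expR_ge0].
apply: le_trans (ler_wpM2l (expR_ge0 _) (lerXn2r n _ _ (sp_mgf R k lam k0 l0))) _.
- by rewrite nnegrE.
- by rewrite nnegrE expR_ge0.
rewrite -expRM_natl -expRD ler_expR.
rewrite /sp_phi (_ : lam * 2 ^+ k = L); last by rewrite /lam /b; field; rewrite lt0r_neq0.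
rewrite eL /h -/L /lam -/b.
rewrite le_eqVlt; apply/orP; left; apply/eqP; field; rewrite lt0r_neq0 //.
Qed.
End T.

Theorem lemma1 (R : realType) (n : nat) (j : int) (x : R) :
  (1 <= n)%N ->
  1 - (clog2 n)%:Z <= j ->
  0 <= x ->
  @tail_prob R n (absz ((clog2 n)%:Z + j)) x
    <= expR (- h x / eta j (gamma_n R n)).
Proof.
move=> n1 hj x0.
set c := clog2 n; set k := absz (c%:Z + j).
have kz : c%:Z + j = k%:Z by rewrite /k gez0_abs //; lia.
have k0 : (0 < k)%N by rewrite -ltz_nat -kz; lia.
apply: le_trans (sp_bound R n k x k0 x0) _.
rewrite ler_expR.
have E : (2:R) ^ j * 2 ^+ c = 2 ^+ k.
  rewrite (_ : (2:R) ^+ c = 2 ^ (c%:Z)) // -expfzDr // addrC kz //.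
have n0 : (n%:R : R) != 0 by rewrite pnatr_eq0 -lt0n.
have c0 : (2:R) ^+ c != 0 by rewrite expf_neq0.
have j0 : (2:R) ^ j != 0 by rewrite expfz_neq0.
have k2 : (2:R) ^+ k != 0 by rewrite expf_neq0.
have Eeta : eta j (gamma_n R n) = 2 ^+ k / n%:R.
  by rewrite /eta /gamma_n natrX -/c -E; field; rewrite n0 c0.
rewrite Eeta le_eqVlt; apply/orP; left; apply/eqP; field; rewrite n0 k2 //.
Qed.
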